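(* Let $N\ge1$ and let $\mathbf s$ be the algebra anti-automorphism of $\mathcal H^N$ determined by $\mathbf s(Y_u^i)=Y_{u^*}^i$. Then $m^{op}=\mathbf s\circ m\circ(\mathbf s\otimes\mathbf s)$, $\Delta=(\mathbf s\otimes\mathbf s)\circ\Delta\circ\mathbf s$, and $S_{\mathcal L}=\mathbf s\,S_{\mathcal H}\,\mathbf s$.
   Context: Let $\langle N\rangle=\{1,\dots,N\}$; for a word $u=u(1)\cdots u(p)$ let $|u|=p$ and $u^*=u(p)\cdots u(1)$. $\mathcal H=\mathcal H^N$ is, as an algebra (multiplication $m$), the free unital associative complex algebra on generators $Y_u^i$ ($i\in\langle N\rangle$, $|u|\ge2$); set $Y_j^i=\delta_{ij}1$ for letters. Counit: the algebra homomorphism $\varepsilon$ with $\varepsilon(Y_u^i)=0$. Comultiplication: the algebra homomorphism $\Delta$ with $\Delta(Y_u^i)=\sum_{q=1}^{p}\sum_{(C_1,\dots,C_q)}\sum_{v\in\langle N\rangle^q} Y_{u|C_1}^{v(1)}\cdots Y_{u|C_q}^{v(q)}\otimes Y_v^i$ ($p=|u|$, the middle sum over all partitions of $\{1,\dots,p\}$ into nonempty consecutive intervals $C_1<\dots<C_q$, $u|C_k$ the subword indexed by $C_k$). $S_{\mathcal H}$ is its (invertible) antipode. $m^{op}=m\circ\tau$, $\tau$ the flip. The anti-automorphism $\mathbf s$ acts by $\mathbf s(Y_{u_1}^{i_1}\cdots Y_{u_n}^{i_n})=Y_{u_n^*}^{i_n}\cdots Y_{u_1^*}^{i_1}$. $S_{\mathcal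 L}=S_{\mathcal H}^{-1}$ is the antipode of the left Lagrange Hopf algebra $(\mathcal H,m,\tau\circ\Delta,\varepsilon)$. *)

(* Defs.v *)
(* The free algebra H^N is modelled as the monoid algebra
   {malg algC[{fmonom gen N}]} (multinomials' monalg) over the free monoid on
   the generators Y_u^i (i in <N>, |u| >= 2), with complex (algebraic) scalars.
   H (x) H is modelled as the monoid algebra over the product monoid
   fmonom * fmonom, i.e. the vector space with basis (m1 (x) m2) for pairs of
   monomials, with componentwise multiplication. *)
From HB Require Import structures.
From mathcomp Require Import all_boot all_order all_algebra all_field.
From mathcomp Require Import finmap.
From mathcomp.multinomials Require Import monalg.

Set Implicit Arguments.
Unset Strict Implicit.
Unset Printing Implicit Defensive.

Import GRing.Theory.
Local Open Scope ring_scope.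

Section Pair.
Variable I : choiceType.

Definition fm2 := (fmonom I * fmonom I)%type.
HB.instance Definition _ := Choice.on fm2.

Definition fm2one : fm2 := (@mone (fmonom I), @mone (fmonom I)).
Definition fm2mul (a b : fm2) : fm2 := (mmul a.1 b.1, mmul a.2 b.2).

Lemma fm2mulA : associative fm2mul.
Proof. by move=> a b c; rewrite /fm2mul /= !mulmA. Qed.
Lemma fm2mul1m : left_id fm2one fm2mul.
Proof. by case=> a b; rewrite /fm2mul /= !mul1m. Qed.
Lemma fm2mulm1 : right_id fm2one fm2mul.
Proof. by case=> a b; rewrite /fm2mul /= !mulm1. Qed.
Lemma fm2mul_eq1 a b : fm2mul a b = fm2one -> a = fm2one /\ b = fm2one.
Proof.
case: a b => [a1 a2] [b1 b2] [] /unitm [-> ->] /unitm [-> ->]; by [].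
Qed.

HB.instance Definition _ :=
  Choice_isMonomialDef.Build fm2 fm2mulA fm2mul1m fm2mulm1 fm2mul_eq1.
End Pair.

(* a generator Y_u^i is a pair (i, u) with |u| >= 2 *)
Definition gen (N : nat) := {p : 'I_N * seq 'I_N | (1 < size p.2)%N}.

Definition Halg (N : nat) := {malg algC[{fmonom gen N}]}.
Definition H2alg (N : nat) := {malg algC[fm2 (gen N)]}.

Section Hopf.
Variable N : nat.
Local Notation H := (Halg N).
Local Notation H2 := (H2alg N).

Definition mon (m : {fmonom gen N}) : H := << m >>.

(* Y_u^i : the generator if |u| >= 2, delta_{ij} 1 if u = j is a letter;
   (the empty word never occurs below; we set it to 0) *)
Definition Y (u : seq 'I_N) (i : 'I_N) : H :=
  match insub ((i, u) : 'I_N * seq 'I_N) with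
  | Some g => mon (fmu g)
  | None => if u is [:: j] then (i == j)%:R else 0
  end.

Definition tens (a b : H) : H2 :=
  \sum_(m1 <- msupp a) \sum_(m2 <- msupp b)
     << a@_m1 * b@_m2 *g ((m1, m2) : fm2 (gen N)) >>.

Definition tmap (f g : H -> H) (t : H2) : H2 :=
  \sum_(p <- msupp t) t@_p *: tens (f (mon p.1)) (g (mon p.2)).

Definition mult (t : H2) : H :=
  \sum_(p <- msupp t) t@_p *: (mon p.1 * mon p.2).
Definition flip (t : H2) : H2 :=
  \sum_(p <- msupp t) << t@_p *g ((p.2, p.1) : fm2 (gen N)) >>.
Definition mult_op (t : H2) : H := mult (flip t).

(* all partitions of a word into nonempty consecutive blocks
   (u|C_1, ..., u|C_q), listed once each *)
Fixpoint blocks (T : Type) (u : seq T) : seq (seq (seq T)) :=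
  match u with
  | [::] => [:: [::]]
  | x :: u' =>
      flatten [seq (match s with
                    | [::] => [:: [:: [:: x]]]
                    | b :: s' => [:: [:: x] :: s; (x :: b) :: s']
                    end) | s <- blocks u']
  end.

Definition DeltaY (u : seq 'I_N) (i : 'I_N) : H2 :=
  \sum_(C <- blocks u) \sum_(v : (size C).-tuple 'I_N)
     tens (\prod_(k < size C) Y (nth [::] C k) (tnth v k)) (Y v i).

Definition Delta (x : H) : H2 :=
  \sum_(m <- msupp x)
     x@_m *: \prod_(g <- (m : seq (gen N))) DeltaY (val g).2 (val g).1.

Definition Delta_cop (x : H) : H2 := flip (Delta x).

(* counit : the algebra morphism with eps(Y_u^i) = 0, i.e. the coefficient of
   the empty monomial *)
Definition eps (x : H) : algC := x@_(@mone (fmonom (gen N))).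

Definition santi (x : H) : H :=
  \sum_(m <- msupp x)
     x@_m *: \prod_(g <- rev (m : seq (gen N))) Y (rev (val g).2) (val g).1.

Definition is_antipode (D : H -> H2) (S : H -> H) : Prop :=
  (forall (a : algC) (x y : H), S (a *: x + y) = a *: S x + S y) /\
  (forall x : H, mult (tmap S id (D x)) = (eps x)%:MP) /\
  (forall x : H, mult (tmap id S (D x)) = (eps x)%:MP).

End Hopf.

(* Main.v *)
Require Import Defs.
From HB Require Import structures.
From mathcomp Require Import all_boot all_order all_algebra all_field.
From mathcomp Require Import finmap.
From mathcomp.multinomials Require Import monalg.
From mathcomp Require Import zify.

Set Implicit Arguments.
Unset Strict Implicit.
Unset Printing Implicit Defensive.
Import GRing.Theory.
Local Open Scope fset_scope.
Local Open Scope ring_scope.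

Section Lift.
Variables (K : choiceType) (V : lmodType algC).

Definition islin (f : {malg algC[K]} -> V) :=
  forall (a : algC) x y, f (a *: x + y) = a *: f x + f y.

Definition lift (F : K -> V) (x : {malg algC[K]}) : V :=
  \sum_(k <- msupp x) x@_k *: F k.

Lemma liftEw (F : K -> V) x (d : {fset K}) : msupp x `<=` d ->
  lift F x = \sum_(k <- d) x@_k *: F k.
Proof.
move=> le; rewrite /lift (big_fset_incl _ le) // => k _ /mcoeff_outdom ->.
by rewrite scale0r.
Qed.

Lemma lift_lin F : islin (lift F).
Proof.
move=> a x y; set d := msupp x `|` msupp y.
have lx : msupp x `<=` d by apply: fsubsetUl.
have ly : msupp y `<=` d by apply: fsubsetUr.
have lz : msupp (a *: x + y) `<=` d.
  apply: (@fsubset_trans _ (msupp (a *: x) `|` msupp y)); first exact: msuppD_le.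
  apply: fsetUSS => //.
  exact: msuppZ_le.
rewrite (liftEw _ lx) (liftEw _ ly) (liftEw _ lz) scaler_sumr -big_split /=.
by apply: eq_bigr => k _; rewrite mcoeffD mcoeffZ scalerDl scalerA.
Qed.

Lemma liftU F c k : lift F << c *g k >> = c *: F k.
Proof. by rewrite (liftEw _ msuppU_le) big_seq_fset1 mcoeffUU. Qed.

Lemma lift1 F k : lift F << k >> = F k.
Proof. by rewrite liftU scale1r. Qed.

Section LinTh.
Variable f : {malg algC[K]} -> V.
Hypothesis hf : islin f.
Lemma lin0 : f 0 = 0.
Proof.
have := hf 1 0 0; rewrite scaler0 addr0 scale1r => e.
by apply: (addrI (f 0)); rewrite addr0 -e.
Qed.
Lemma linD x y : f (x + y) = f x + f y.
Proof. by have := hf 1 x y; rewrite !scale1r. Qed.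
Lemma linZ a x : f (a *: x) = a *: f x.
Proof. by rewrite -(addr0 (a *: x)) hf lin0 addr0. Qed.
Lemma lin_sum (I : Type) (r : seq I) (P : pred I) (F : I -> {malg algC[K]}) :
  f (\sum_(i <- r | P i) F i) = \sum_(i <- r | P i) f (F i).
Proof. by apply: big_morph; [apply: linD | apply: lin0]. Qed.
End LinTh.

Lemma monU c k : << c *g k >> = c *: (<< k >> : {malg algC[K]}).
Proof. by apply/malgP => l; rewrite mcoeffZ !mcoeffU mulr_natr. Qed.

Lemma lin_ext (f g : {malg algC[K]} -> V) : islin f -> islin g ->
  (forall k, f << k >> = g << k >>) -> forall x, f x = g x.
Proof.
move=> hf hg e x; rewrite (monalgE x) (lin_sum hf) (lin_sum hg).
by apply: eq_bigr => k _; rewrite monU (linZ hf) (linZ hg) e.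
Qed.

Lemma lift_ext (f : {malg algC[K]} -> V) : islin f -> forall x, f x = lift (fun k => f << k >>) x.
Proof. by move=> hf; apply: lin_ext => // [|k]; [apply: lift_lin | rewrite lift1]. Qed.

Lemma liftE F x : lift F x = \sum_(k <- msupp x) x@_k *: F k.
Proof. by []. Qed.

End Lift.

Lemma lift_linF (K1 K2 : choiceType) (V : lmodType algC)
  (F : K1 -> {malg algC[K2]} -> V) x :
  (forall k, islin (F k)) -> islin (fun y => lift (fun k => F k y) x).
Proof.
move=> hF a y y'; rewrite /lift scaler_sumr -big_split; apply: eq_bigr => k _.
by rewrite hF scalerDr !scalerA mulrC.
Qed.

Lemma islin_comp (K1 K2 : choiceType) (V : lmodType algC)
  (f : {malg algC[K2]} -> V) (g : {malg algC[K1]} -> {malg algC[K2]}) :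
  islin f -> islin g -> islin (fun x => f (g x)).
Proof. by move=> hf hg a x y; rewrite hg hf. Qed.

Lemma sum_delta (I : eqType) (r : seq I) (F : I -> algC) y :
  uniq r -> (y \notin r -> F y = 0) ->
  \sum_(x <- r) F x * (x == y)%:R = F y.
Proof.
move=> ur hy; case: (boolP (y \in r)) => yr.
  rewrite (bigD1_seq y) //= eqxx mulr1 big1 ?addr0 // => x /negbTE ->.
  by rewrite mulr0.
rewrite big1_seq ?hy // => x /andP [_ xr]; case: eqP => [e|]; last by rewrite mulr0.
by move: yr; rewrite -e xr.
Qed.

Lemma lift_coef (K1 K2 : choiceType) (F : K1 -> {malg algC[K2]}) x k :
  (lift F x)@_k = \sum_(m <- msupp x) x@_m * (F m)@_k.
Proof.
rewrite /lift raddf_sum /=; apply: eq_bigr => m _; exact: mcoeffZ.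
Qed.

Section MonAlg.
Variable K : monomType.
Local Notation A := {malg algC[K]}.

Lemma monM (k1 k2 : K) : << k1 >> * << k2 >> = << mmul k1 k2 >> :> A.
Proof. by rewrite malgM_def fgmulUU mulr1. Qed.

Lemma malg1E : 1 = << mone >> :> A.
Proof. by []. Qed.

Lemma scalerAr_malg a (x y : A) : x * (a *: y) = a *: (x * y).
Proof.
have h : forall z : A, z * a%:MP = a%:MP * z.
  apply: lin_ext => [b u v|b u v|k].
  - by rewrite mulrDl scalerAl.
  - by rewrite !mul_malgC scalerDr !scalerA mulrC.
  by rewrite !malgM_def !fgmulUU mul1r mulr1 mul1m mulm1.
by rewrite -mul_malgC mulrA h -mulrA mul_malgC.
Qed.

Lemma lin_mulr (z : A) : islin (fun x : A => x * z).
Proof. by move=> a x y; rewrite mulrDl scalerAl. Qed.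

Lemma lin_mull (z : A) : islin (fun x : A => z * x).
Proof. by move=> a x y; rewrite mulrDr scalerAr_malg. Qed.

Variable sg : K -> K.
Hypothesis sgM : forall k1 k2, sg (mmul k1 k2) = mmul (sg k2) (sg k1).
Hypothesis sg1 : sg mone = mone.

Definition alift : A -> A := lift (fun k => << sg k >>).

Lemma alift_lin : islin alift.
Proof. exact: lift_lin. Qed.

Lemma alift1 : alift 1 = 1.
Proof. by rewrite malg1E /alift lift1 sg1. Qed.

Lemma aliftM (x y : A) : alift (x * y) = alift y * alift x.
Proof.
move: x; apply: lin_ext.
- exact: islin_comp alift_lin (lin_mulr y).
- exact: islin_comp (lin_mull (alift y)) alift_lin.
move=> k; move: y; apply: lin_ext.
- exact: islin_comp alift_lin (lin_mull _).
- exact: islin_comp (lin_mulr _) alift_lin.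
by move=> l; rewrite /alift monM !lift1 monM sgM.
Qed.

Lemma alift_prod (I : Type) (r : seq I) (F : I -> A) :
  alift (\prod_(i <- r) F i) = \prod_(i <- rev r) alift (F i).
Proof.
elim: r => [|i r IH]; first by rewrite !big_nil alift1.
by rewrite big_cons aliftM IH rev_cons -cats1 big_cat big_seq1.
Qed.

End MonAlg.

Section Blocks.
Variable T : eqType.

Definition bstep (x : T) (s : seq (seq T)) : seq (seq (seq T)) :=
  match s with
  | [::] => [:: [:: [:: x]]]
  | b :: s' => [:: [:: x] :: s; (x :: b) :: s']
  end.

Lemma blocks_cons (x : T) u :
  blocks (x :: u) = flatten [seq bstep x s | s <- blocks u].
Proof. by []. Qed.

Lemma mem_blocks (u : seq T) C :
  (C \in blocks u) = (flatten C == u) && ([::] \notin C).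
Proof.
elim: u C => [|x u IH] C.
  rewrite /= inE; case: C => [|c C] //=.
  by case: c => [|y c]; rewrite /= ?inE ?eqxx ?andbF.
have -> : (C \in blocks (x :: u)) = (C \in flatten [seq bstep x s | s <- blocks u]) by [].
apply/flatten_mapP/andP.
- case=> s; rewrite IH => /andP [/eqP fs ns].
  case: s fs ns => [|b s'] /= fs ns.
    by rewrite inE => /eqP ->; rewrite /= -fs.
  move: ns; rewrite inE negb_or => /andP [nb ns'].
  rewrite !inE => /orP [] /eqP -> /=; rewrite ?inE /= -fs.
    by rewrite eqxx negb_or nb ns'.
  by rewrite eqxx ns'.
- case=> /eqP fC nC.
  case: C fC nC => [|c C] //= fC; rewrite inE negb_or => /andP [nc nC].
  case: c fC nc => [|y c] //= [<- fC] _.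
  case: c fC => [|z c] /= fC.
    case: C fC nC => [|b s'] /= fC nC.
      by exists [::]; [rewrite IH -fC eqxx | rewrite inE].
    by exists (b :: s'); [rewrite IH /= fC eqxx nC | rewrite inE eqxx].
  exists ((z :: c) :: C); last by rewrite !inE eqxx orbT.
  by rewrite IH /= fC eqxx /= inE negb_or nC.
Qed.

Definition bunstep (C : seq (seq T)) : seq (seq T) :=
  match C with
  | [::] => [::]
  | c :: C' => if c is [:: _] then C' else behead c :: C'
  end.

Lemma uniq_blocks (u : seq T) : uniq (blocks u).
Proof.
elim: u => [|x u IH] //; rewrite blocks_cons.
have hS : forall s, s \in blocks u -> uniq (bstep x s) /\
    forall C, C \in bstep x s -> bunstep C = s.
  move=> s; rewrite mem_blocks => /andP [_ ns].
  case: s ns => [|b s'] /=; first by split => // C; rewrite inE => /eqP ->.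
  rewrite inE negb_or => /andP [nb _]; split.
    rewrite inE andbT; apply/eqP => -[]; by case: b nb.
  move=> C; rewrite !inE => /orP [] /eqP -> //=.
  by case: b nb => [|z [|w b]].
move: IH (fun s (hs : s \in blocks u) => hS s hs).
elim: (blocks u) => [|s B IHB] //= /andP [sB uB] hB.
rewrite cat_uniq; apply/and3P; split.
- by case: (hB s (mem_head _ _)).
- apply/hasPn => C /flatten_mapP [s' s'B Cs'] /=; apply/negP => Cs.
  have e1 := (hB s (mem_head _ _)).2 C Cs.
  have e2 := (hB s' (mem_behead (s := s :: B) s'B)).2 C Cs'.
  by move: sB; rewrite -e1 e2 s'B.
- by apply: IHB => // s' hs'; apply: hB; rewrite inE hs' orbT.
Qed.

Definition rr (C : seq (seq T)) := rev (map rev C).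

Lemma rrK : involutive rr.
Proof. by move=> C; rewrite /rr map_rev revK -map_comp (eq_map revK) map_id. Qed.

Lemma blocks_rev (u : seq T) : perm_eq (blocks (rev u)) (map rr (blocks u)).
Proof.
apply: uniq_perm; first exact: uniq_blocks.
  by rewrite (map_inj_uniq (can_inj rrK)) uniq_blocks.
move=> C; rewrite -{2}(rrK C) (mem_map (can_inj rrK)) !mem_blocks.
congr (_ && _).
  rewrite /rr -rev_flatten; apply/eqP/eqP => [->|<-]; by rewrite revK.
by rewrite /rr mem_rev -{2}[[::]]/(rev (@nil T)) (mem_map (can_inj (@revK T))).
Qed.

Lemma size_rr C : size (rr C) = size C.
Proof. by rewrite /rr size_rev size_map. Qed.

Lemma size_blocks (C : seq (seq T)) : [::] \notin C ->
  (size C <= size (flatten C))%N /\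
  (size C = size (flatten C) -> C = map (fun x => [:: x]) (flatten C)).
Proof.
elim: C => [|c C IH] //=; rewrite inE negb_or => /andP [nc nC].
case: (IH nC) => le eq; rewrite size_cat.
case: c nc => [|y [|z c]] //= _; split.
- by rewrite add1n ltnS.
- by rewrite add1n => -[e]; congr (_ :: _); exact: eq e.
- by move: le; lia.
- by move=> e; exfalso; move: le e; lia.
Qed.

End Blocks.

Section Main.
Variable N : nat.
Hypothesis hN : (0 < N)%N.
Local Notation G := (gen N).
Local Notation M := {fmonom G}.
Local Notation H := (Halg N).
Local Notation H2 := (H2alg N).

Lemma star_proof (g : G) : (1 < size (rev (val g).2))%N.
Proof. by rewrite size_rev; exact: (valP g). Qed.

Definition star (g : G) : G := Sub ((val g).1, rev (val g).2) (star_proof g).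

Lemma starK : involutive star.
Proof. by move=> g; apply: val_inj => /=; rewrite revK; case: (val g). Qed.

Definition srev (m : M) : M := FMonom (map star (rev m)).

Lemma fmonP (m1 m2 : M) : (m1 : seq G) = m2 -> m1 = m2.
Proof. exact: val_inj. Qed.

Lemma srevM (m1 m2 : M) : srev (mmul m1 m2) = mmul (srev m2) (srev m1).
Proof. by apply: fmonP; rewrite fmM /= fmM rev_cat map_cat. Qed.

Lemma srev1 : srev mone = mone.
Proof. by apply: fmonP; rewrite /= fm1. Qed.

Lemma srevK : involutive srev.
Proof.
move=> m; apply: fmonP => /=.
by rewrite -map_rev revK -map_comp (eq_map starK) map_id.
Qed.

Lemma prod_fmu (I : Type) (r : seq I) (f : I -> G) :
  \prod_(i <- r) (<< fmu (f i) >> : H) = << FMonom (map f r) >>.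
Proof.
elim: r => [|i r IH]; first by rewrite big_nil malg1E; congr (<< _ >>); apply: fmonP; rewrite fm1.
by rewrite big_cons IH monM; congr (<< _ >>); apply: fmonP; rewrite fmM fmU.
Qed.

Lemma Y_gen (g : G) : Y (val g).2 (val g).1 = << fmu g >>.
Proof.
rewrite /Y; case: insubP => [g' _ e | /negP []]; last exact: (valP g).
rewrite /mon; congr (<< fmu _ >>); apply: val_inj; rewrite e.
by case: (val g).
Qed.

Lemma Y_star (g : G) : Y (rev (val g).2) (val g).1 = << fmu (star g) >>.
Proof. by rewrite -Y_gen. Qed.

Lemma santiE (x : H) : santi x = alift srev x.
Proof.
rewrite /santi /alift /lift; apply: eq_bigr => m _; congr (_ *: _).
rewrite (eq_bigr (fun g => << fmu (star g) >>)); last by move=> g _; exact: Y_star.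
by rewrite prod_fmu.
Qed.

Lemma santi_lin : islin (@santi N).
Proof. by move=> a x y; rewrite !santiE alift_lin. Qed.

Lemma santi_mon (m : M) : santi << m >> = << srev m >>.
Proof. by rewrite santiE /alift lift1. Qed.

Lemma santiM (x y : H) : santi (x * y) = santi y * santi x.
Proof. by rewrite !santiE (aliftM srevM). Qed.

Lemma santi1 : santi 1 = 1 :> H.
Proof. by rewrite santiE (alift1 srev1). Qed.

Lemma santi_prod (I : Type) (r : seq I) (F : I -> H) :
  santi (\prod_(i <- r) F i) = \prod_(i <- rev r) santi (F i).
Proof.
rewrite santiE (alift_prod srevM srev1).
by apply: eq_bigr => i _; rewrite santiE.
Qed.

Lemma santiK (x : H) : santi (santi x) = x.
Proof.
move: x; apply: lin_ext => [||m]; last by rewrite !santi_mon srevK.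
- exact: islin_comp santi_lin santi_lin.
- by move=> a x y.
Qed.

Lemma santi_coef (x : H) m : (santi x)@_m = x@_(srev m).
Proof.
rewrite santiE lift_coef.
rewrite (eq_bigr (fun k => x@_k * (k == srev m)%:R)); last first.
  move=> k _; rewrite mcoeffU1; congr (_ * _).
  by rewrite (can2_eq srevK srevK).
apply: sum_delta; first exact: fset_uniq.
by move/mcoeff_outdom.
Qed.

Lemma santiC c : santi c%:MP = c%:MP :> H.
Proof. by rewrite -[c%:MP]mulr1 mul_malgC (linZ santi_lin) santi1. Qed.

Lemma santi_Y (w : seq 'I_N) (j : 'I_N) : santi (Y w j) = Y (rev w) j.
Proof.
case: (ltnP 1 (size w)) => hw.
  pose g : G := Sub (j, w) hw.
  have -> : Y w j = << fmu g >> by rewrite -Y_gen.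
  rewrite santi_mon; have -> : Y (rev w) j = Y (rev (val g).2) (val g).1 by [].
  rewrite Y_star; congr (<< _ >>); apply: fmonP; by rewrite /srev /= !fmU.
have hw' : (size (rev w) <= 1)%N by rewrite size_rev.
rewrite /Y !insubF ?size_rev ?ltnNge ?hw //.
case: w hw {hw'} => [|a [|b w]] //= _; first by rewrite (lin0 santi_lin).
case: (j == a); first by rewrite santi1.
by rewrite (lin0 santi_lin).
Qed.


Definition srev2 (p : fm2 G) : fm2 G := (srev p.1, srev p.2).

Lemma fm2M (p q : fm2 G) : mmul p q = (mmul p.1 q.1, mmul p.2 q.2).
Proof. by []. Qed.

Lemma fm2_1 : (mone : fm2 G) = (mone, mone).
Proof. by []. Qed.

Lemma srev2M p q : srev2 (mmul p q) = mmul (srev2 q) (srev2 p).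
Proof. by rewrite /srev2 !fm2M /= !srevM. Qed.

Lemma srev2_1 : srev2 mone = mone.
Proof. by rewrite /srev2 fm2_1 /= srev1. Qed.

Lemma tensE (x y : H) : tens x y = lift (fun m1 => lift (fun m2 => << (m1, m2) : fm2 G >>) y) x.
Proof.
rewrite /tens /lift. apply: eq_bigr => m1 _. rewrite scaler_sumr.
by apply: eq_bigr => m2 _; rewrite [LHS]monU scalerA.
Qed.

Lemma tens_mon (a b : M) : tens << a >> << b >> = << (a, b) : fm2 G >>.
Proof. by rewrite tensE !lift1. Qed.

Lemma tens_linl (y : H) : islin (fun x => tens x y).
Proof. by move=> a x x'; rewrite !tensE lift_lin. Qed.

Lemma tens_linr (x : H) : islin (fun y => tens x y).
Proof.
move=> a y y'; rewrite !tensE.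
exact: (lift_linF x (fun m1 => lift_lin (fun m2 => << (m1, m2) : fm2 G >>))).
Qed.

Lemma tmapE (f g : H -> H) t :
  tmap f g t = lift (fun p : fm2 G => tens (f << p.1 >>) (g << p.2 >>)) t.
Proof. by []. Qed.

Lemma tmap_lin f g : islin (@tmap N f g).
Proof. by move=> a x y; rewrite !tmapE lift_lin. Qed.

Lemma tmap_mon f g (p : fm2 G) : tmap f g << p >> = tens (f << p.1 >>) (g << p.2 >>).
Proof. by rewrite tmapE lift1. Qed.

Lemma TTE t : tmap (@santi N) (@santi N) t = alift srev2 t.
Proof.
rewrite tmapE /alift /lift; apply: eq_bigr => p _.
by rewrite !santi_mon tens_mon.
Qed.

Lemma TT_lin : islin (tmap (@santi N) (@santi N)).
Proof. exact: tmap_lin. Qed.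

Lemma TT_mon p : tmap (@santi N) (@santi N) << p >> = << srev2 p >>.
Proof. by rewrite TTE /alift lift1. Qed.

Lemma TTM (x y : H2) : tmap (@santi N) (@santi N) (x * y) =
  tmap (@santi N) (@santi N) y * tmap (@santi N) (@santi N) x.
Proof. by rewrite !TTE (aliftM srev2M). Qed.

Lemma TT_prod (I : Type) (r : seq I) (F : I -> H2) :
  tmap (@santi N) (@santi N) (\prod_(i <- r) F i) =
  \prod_(i <- rev r) tmap (@santi N) (@santi N) (F i).
Proof.
rewrite TTE (alift_prod srev2M srev2_1).
by apply: eq_bigr => i _; rewrite TTE.
Qed.

Lemma TT_tens (x y : H) :
  tmap (@santi N) (@santi N) (tens x y) = tens (santi x) (santi y).
Proof.
move: x; apply: lin_ext.
- exact: islin_comp TT_lin (tens_linl y).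
- exact: islin_comp (tens_linl _) santi_lin.
move=> a; move: y; apply: lin_ext.
- exact: islin_comp TT_lin (tens_linr _).
- exact: islin_comp (tens_linr _) santi_lin.
by move=> b; rewrite tens_mon TT_mon !santi_mon tens_mon.
Qed.

Lemma mult_lin : islin (@mult N).
Proof. by move=> a x y; rewrite /mult -!/(lift _ _) lift_lin. Qed.

Lemma mult_mon (p : fm2 G) : mult << p >> = << p.1 >> * << p.2 >>.
Proof. by rewrite /mult -/(lift _ _) lift1. Qed.

Lemma mult_tens (x y : H) : mult (tens x y) = x * y.
Proof.
move: x; apply: lin_ext.
- exact: islin_comp mult_lin (tens_linl y).
- exact: lin_mulr.
move=> a; move: y; apply: lin_ext.
- exact: islin_comp mult_lin (tens_linr _).
- exact: lin_mull.
by move=> b; rewrite tens_mon mult_mon.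
Qed.

Lemma tens_coef (x y : H) (p : fm2 G) : (tens x y)@_p = x@_p.1 * y@_p.2.
Proof.
rewrite tensE lift_coef.
rewrite (eq_bigr (fun m1 => (x@_m1 * y@_p.2) * (m1 == p.1)%:R)); last first.
  move=> m1 _; rewrite lift_coef -mulrA; congr (_ * _).
  rewrite (eq_bigr (fun m2 => (y@_m2 * (m1 == p.1)%:R) * (m2 == p.2)%:R)).
    apply: (sum_delta (F := fun m2 => y@_m2 * (m1 == p.1)%:R)); first exact: fset_uniq.
    by move/mcoeff_outdom => ->; rewrite mul0r.
  move=> m2 _; rewrite mcoeffU1 -mulrA -natrM; congr (_ * _).
  by case: p => p1 p2 /=; rewrite xpair_eqE; case: (m1 == p1); case: (m2 == p2).
apply: (sum_delta (F := fun m1 => x@_m1 * y@_p.2)); first exact: fset_uniq.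
by move/mcoeff_outdom => ->; rewrite mul0r.
Qed.

Definition dflt : 'I_N := Ordinal hN.

Lemma prod_zip q (C : seq (seq 'I_N)) (v : q.-tuple 'I_N) (F : seq 'I_N -> 'I_N -> H) :
  size C = q ->
  \prod_(k < q) F (nth [::] C k) (tnth v k) = \prod_(p <- zip C v) F p.1 p.2.
Proof.
move=> sC; rewrite (big_nth ([::], dflt)) size_zip size_tuple sC minnn big_mkord.
by apply: eq_bigr => k _; rewrite nth_zip ?size_tuple //= (tnth_nth dflt).
Qed.

Definition Gq (i : 'I_N) q (C : seq (seq 'I_N)) : H2 :=
  \sum_(v : q.-tuple 'I_N) tens (\prod_(p <- zip C v) Y p.1 p.2) (Y v i).

Lemma DeltaYE u i : DeltaY u i = \sum_(C <- blocks u) Gq i (size C) C.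
Proof.
apply: eq_bigr => C _; apply: eq_bigr => v _; by rewrite prod_zip.
Qed.

Lemma zip_mapl (A B C : Type) (f : A -> C) (s : seq A) (t : seq B) :
  zip (map f s) t = map (fun p => (f p.1, p.2)) (zip s t).
Proof. by elim: s t => [|a s IH] [|b t] //=; rewrite IH. Qed.

Lemma rev_tuple_inj q : injective (@rev_tuple q 'I_N).
Proof. by move=> v w /(congr1 val) /= /(congr1 rev); rewrite !revK => /val_inj. Qed.

Lemma TT_Gq i q C : size C = q ->
  tmap (@santi N) (@santi N) (Gq i q (rr C)) = Gq i q C.
Proof.
move=> sC; rewrite /Gq (lin_sum TT_lin).
rewrite (reindex_inj (@rev_tuple_inj q)) /=; apply: eq_bigr => v _.
rewrite TT_tens santi_Y revK santi_prod rev_zip; last by rewrite size_rr size_tuple.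
rewrite /rr !revK zip_mapl big_map; congr (tens _ _).
by apply: eq_bigr => p _; rewrite santi_Y revK.
Qed.

Lemma DYsym' (u : seq 'I_N) (i : 'I_N) :
  tmap (@santi N) (@santi N) (DeltaY (rev u) i) = DeltaY u i.
Proof.
rewrite !DeltaYE (lin_sum TT_lin) (perm_big _ (blocks_rev u)) big_map.
by apply: eq_bigr => C _; rewrite size_rr TT_Gq.
Qed.

Lemma flipE t : flip t = lift (fun p : fm2 G => << (p.2, p.1) : fm2 G >>) t.
Proof. by rewrite /flip /lift; apply: eq_bigr => p _; rewrite [LHS]monU. Qed.

Lemma flip_lin : islin (@flip N).
Proof. by move=> a x y; rewrite !flipE lift_lin. Qed.

Lemma flip_mon p : flip << p >> = << (p.2, p.1) : fm2 G >>.
Proof. by rewrite flipE lift1. Qed.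

Lemma mult_op_lin : islin (@mult_op N).
Proof. by move=> a x y; rewrite /mult_op flip_lin mult_lin. Qed.

Lemma claim1 (t : H2) :
  mult_op t = santi (mult (tmap (@santi N) (@santi N) t)).
Proof.
move: t; apply: lin_ext; first exact: mult_op_lin.
  exact: islin_comp santi_lin (islin_comp mult_lin TT_lin).
move=> p; rewrite /mult_op flip_mon mult_mon TT_mon mult_mon /= !monM santi_mon.
by rewrite srevM !srevK.
Qed.

Lemma Delta_lin : islin (@Delta N).
Proof. by move=> a x y; rewrite /Delta -!/(lift _ _) lift_lin. Qed.

Lemma Delta_mon (m : M) :
  Delta << m >> = \prod_(g <- (m : seq G)) DeltaY (val g).2 (val g).1.
Proof. by rewrite /Delta -/(lift _ _) lift1. Qed.


Lemma claim2 (x : H) :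
  Delta x = tmap (@santi N) (@santi N) (Delta (santi x)).
Proof.
move: x; apply: lin_ext; first exact: Delta_lin.
  exact: islin_comp TT_lin (islin_comp Delta_lin santi_lin).
move=> m; rewrite santi_mon !Delta_mon TT_prod /srev /=.
rewrite map_rev revK big_map; apply: eq_bigr => g _.
by rewrite -DYsym' /=.
Qed.

Definition deg (m : M) : nat := \sum_(g <- (m : seq G)) (size (val g).2).-1.

Lemma degM a b : deg (mmul a b) = (deg a + deg b)%N.
Proof. by rewrite /deg fmM big_cat. Qed.

Lemma deg_fmu g : deg (fmu g) = (size (val g).2).-1.
Proof. by rewrite /deg fmU big_seq1. Qed.

Definition Rlt d (t : H2) := forall p, t@_p != 0 -> (deg p.2 < d)%N.
Definition Rle d (t : H2) := forall p, t@_p != 0 -> (deg p.2 <= d)%N.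

Lemma coefM_nz (x y : H2) k : (x * y)@_k != 0 ->
  exists k1 k2, [/\ x@_k1 != 0, y@_k2 != 0 & k = mmul k1 k2].
Proof.
rewrite mcoeff_neq0 => /msuppM_le [k1 [k2 [h1 h2 ->]]].
by exists k1, k2; rewrite !mcoeff_neq0.
Qed.

Lemma Rle_mul d1 d2 x y : Rle d1 x -> Rle d2 y -> Rle (d1 + d2) (x * y).
Proof.
move=> h1 h2 p /coefM_nz [k1 [k2 [n1 n2 ->]]]; rewrite fm2M /= degM.
by have := h1 _ n1; have := h2 _ n2; lia.
Qed.

Lemma Rlt_mull d1 d2 x y : Rle d1 x -> Rlt d2 y -> Rlt (d1 + d2) (x * y).
Proof.
move=> h1 h2 p /coefM_nz [k1 [k2 [n1 n2 ->]]]; rewrite fm2M /= degM.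
by have := h1 _ n1; have := h2 _ n2; lia.
Qed.

Lemma Rlt_mulr d1 d2 x y : Rlt d1 x -> Rle d2 y -> Rlt (d1 + d2) (x * y).
Proof.
move=> h1 h2 p /coefM_nz [k1 [k2 [n1 n2 ->]]]; rewrite fm2M /= degM.
by have := h1 _ n1; have := h2 _ n2; lia.
Qed.

Lemma Rlt_add d x y : Rlt d x -> Rlt d y -> Rlt d (x + y).
Proof.
move=> h1 h2 p; rewrite mcoeffD; case: (eqVneq (x@_p) 0) => [->|nx _]; last exact: h1.
by rewrite add0r; apply: h2.
Qed.

Lemma Rle_add d x y : Rle d x -> Rle d y -> Rle d (x + y).
Proof.
move=> h1 h2 p; rewrite mcoeffD; case: (eqVneq (x@_p) 0) => [->|nx _]; last exact: h1.
by rewrite add0r; apply: h2.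
Qed.

Lemma Rlt0 d : Rlt d 0.
Proof. by move=> p; rewrite mcoeff0 eqxx. Qed.

Lemma Rlt_le d x : Rlt d x -> Rle d x.
Proof. by move=> h p /h /ltnW. Qed.

Lemma Rlt_sum d (I : Type) (r : seq I) (P : pred I) (F : I -> H2) :
  (forall i, P i -> Rlt d (F i)) -> Rlt d (\sum_(i <- r | P i) F i).
Proof.
move=> h; apply: (big_ind (Rlt d)); [exact: Rlt0 | exact: Rlt_add | exact: h].
Qed.

Lemma Rle_A (m : M) : Rle (deg m) << (mone, m) : fm2 G >>.
Proof.
move=> p; rewrite mcoeffU1; case: ((mone, m) =P p) => [<-|] //=.
by rewrite eqxx.
Qed.

Lemma Ydeg w j k : (Y w j)@_k != 0 -> (deg k <= (size w).-1)%N.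
Proof.
rewrite /Y; case: insubP => [g' _ e | hw].
  rewrite /mon mcoeffU1; case: (fmu g' =P k) => [<- _|]; last by rewrite eqxx.
  by rewrite deg_fmu e.
case: w hw => [|a [|b w]] //= _; first by rewrite mcoeff0 eqxx.
case: (j == a); rewrite /= ?mulr1n ?mulr0n ?mcoeff0 ?eqxx // mcoeff1.
by case: (k =P mone) => [-> _|]; [rewrite /deg fm1 big_nil | rewrite eqxx].
Qed.

Lemma Rlt_tens d (a : H) (b : H) : (forall k, b@_k != 0 -> (deg k < d)%N) ->
  Rlt d (tens a b).
Proof.
move=> h p; rewrite tens_coef; case: (eqVneq (b@_p.2) 0) => [->|nb _]; last exact: h.
by rewrite mulr0 eqxx.
Qed.

Lemma prod_single (u v : seq 'I_N) : size v = size u ->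
  \prod_(p <- zip (map (fun x => [:: x]) u) v) Y p.1 p.2 = ((v == u : bool)%:R : H).
Proof.
elim: u v => [|x u IH] [|j v] //=; first by rewrite big_nil.
move=> [] /IH e; rewrite big_cons e /= eqseq_cons /Y insubF //=.
by case: (j == x); case: (v == u); rewrite /= ?mulr1n ?mulr0n ?mul1r ?mul0r.
Qed.

Lemma DY_split (g : G) : exists R, Rlt (deg (fmu g)) R /\
  DeltaY (val g).2 (val g).1 = << (mone, fmu g) : fm2 G >> + R.
Proof.
set u := (val g).2; set i := (val g).1.
have su : (1 < size u)%N by exact: (valP g).
set C0 := map (fun x => [:: x]) u.
have C0b : C0 \in blocks u.
  rewrite mem_blocks flatten_map1 map_id eqxx /=.
  by apply/mapP => -[x _].
exists (\sum_(C <- blocks u | C != C0) Gq i (size C) C); split; last first.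
  rewrite DeltaYE (bigD1_seq C0) //= ?uniq_blocks //; congr (_ + _).
  rewrite /Gq size_map.
  have tu : size u == size u by [].
  rewrite (bigD1 (Tuple tu)) //= [X in _ + X]big1 ?addr0 => [|v /eqP nv].
    rewrite /C0 prod_single ?eqxx //.
    have -> : Y u i = << fmu g >> by exact: Y_gen.
    by rewrite malg1E tens_mon.
  rewrite /C0 prod_single ?size_tuple //; case: eqP => [e|_].
    by case: nv; apply: val_inj.
  by rewrite (lin0 (tens_linl _)).
rewrite big_seq_cond; apply: Rlt_sum => C /andP [Cb nC].
move: Cb; rewrite mem_blocks => /andP [/eqP fC nC'].
have [le eqs] := size_blocks nC'.
have hne : size C != size u.
  by apply: contra nC => /eqP e; rewrite /C0 -fC; apply/eqP; apply: eqs; rewrite fC.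
have hC : (0 < size C)%N.
  by case: C fC {nC nC' le eqs hne} => [|c C] //= fC; move: su; rewrite -fC.
rewrite fC in le.
apply: Rlt_sum => v _; apply: Rlt_tens => k /Ydeg.
rewrite size_tuple deg_fmu -/u => hk; apply: (leq_ltn_trans hk).
have lt : (size C < size u)%N by rewrite ltn_neqAle hne le.
by move: lt hC; move: (size C) (size u) => a b; lia.
Qed.


Lemma Delta_split (m : M) : exists R, Rlt (deg m) R /\
  Delta << m >> = << (mone, m) : fm2 G >> + R.
Proof.
rewrite Delta_mon.
suff: forall r : seq G, exists R, Rlt (deg (FMonom r)) R /\
  \prod_(g <- r) DeltaY (val g).2 (val g).1 = << (mone, FMonom r) : fm2 G >> + R.
  by move=> /(_ m); rewrite fmK.
elim=> [|g r [R' [hR' e']]].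
  exists 0; split; first exact: Rlt0.
  rewrite big_nil addr0 malg1E; congr (<< _ >>). rewrite fm2_1. congr (_, _).
  by apply: fmonP; rewrite fm1.
have [R1 [hR1 e1]] := DY_split g.
exists (<< (mone, fmu g) : fm2 G >> * R' + R1 * (<< (mone, FMonom r) : fm2 G >> + R')).
split.
  have -> : deg (FMonom (g :: r)) = (deg (fmu g) + deg (FMonom r))%N.
    by rewrite -degM; congr deg; apply: fmonP; rewrite fmM fmU.
  apply: Rlt_add; first exact: Rlt_mull (@Rle_A (fmu g)) hR'.
  apply: Rlt_mulr hR1 _; apply: Rle_add; [exact: (@Rle_A (FMonom r)) | exact: Rlt_le].
have hA : << (mone, fmu g) : fm2 G >> * << (mone, FMonom r) : fm2 G >> = << (mone, FMonom (g :: r)) : fm2 G >> :> H2.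
  rewrite monM. congr (<< _ >>). rewrite fm2M /= mul1m. congr (_, _). apply: fmonP; by rewrite fmM fmU.
rewrite big_cons. rewrite e1. rewrite e'. rewrite -hA.
rewrite mulrDl. rewrite mulrDr. rewrite -addrA.
done.
Qed.

Definition Phi (S : H -> H) (t : H2) : H := mult (tmap S id (flip t)).

Lemma Phi_lin S : islin (Phi S).
Proof. by move=> a x y; rewrite /Phi flip_lin tmap_lin mult_lin. Qed.

Lemma PhiE S t : Phi S t = lift (fun p : fm2 G => S << p.2 >> * << p.1 >>) t.
Proof.
move: t; apply: lin_ext; [exact: Phi_lin | exact: lift_lin |].
by move=> p; rewrite lift1 /Phi flip_mon tmap_mon mult_tens.
Qed.

Lemma Phi_low S T d t : Rlt d t ->
  (forall k, (deg k < d)%N -> S << k >> = T << k >>) -> Phi S t = Phi T t.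
Proof.
move=> ht hST; rewrite !PhiE /lift; apply: eq_big_seq => p.
by rewrite -mcoeff_neq0 => /ht /hST ->.
Qed.

Lemma antipode_unique (S T : H -> H) :
  (forall x, Phi S (Delta x) = (eps x)%:MP) ->
  (forall x, Phi T (Delta x) = (eps x)%:MP) ->
  forall m, S << m >> = T << m >>.
Proof.
move=> hS hT.
suff: forall n m, (deg m < n)%N -> S << m >> = T << m >> by move=> h m; exact: h _ m (ltnSn _).
elim=> [|n IH] m //; rewrite ltnS => hm.
have [R [hR e]] := Delta_split m.
have ePhi : forall U : H -> H, Phi U (Delta << m >>) = U << m >> + Phi U R.
  move=> U; rewrite e (linD (Phi_lin U)) PhiE lift1 /= -malg1E mulr1.
  by congr (_ + _); rewrite PhiE.
have := hS << m >>; rewrite ePhi => eS.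
have := hT << m >>; rewrite ePhi => eT.
have eR : Phi S R = Phi T R.
  by apply: (Phi_low hR) => k hk; apply: IH; exact: leq_trans hk hm.
by apply: (addIr (Phi S R)); rewrite eS eR eT.
Qed.

Lemma eps_santi (x : H) : eps (santi x) = eps x.
Proof. by rewrite /eps santi_coef srev1. Qed.

Lemma lemma5_part3 (SH SL : H -> H) :
  is_antipode (@Delta N) SH -> is_antipode (@Delta_cop N) SL ->
  forall x, SL x = santi (SH (santi x)).
Proof.
move=> [linH [_ rH]] [linL [lL _]].
set T := fun x => santi (SH (santi x)).
have linT : islin T by exact: islin_comp santi_lin (islin_comp linH santi_lin).
have key : forall t, Phi T (tmap (@santi N) (@santi N) t) = santi (mult (tmap id SH t)).
  apply: lin_ext; [exact: islin_comp (Phi_lin T) TT_lin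
                  | exact: islin_comp santi_lin (islin_comp mult_lin (tmap_lin _ _)) |].
  move=> p; rewrite TT_mon PhiE lift1 tmap_mon mult_tens santiM /T /= santi_mon srevK.
  by rewrite santi_mon.
have hT : forall x, Phi T (Delta x) = (eps x)%:MP.
  move=> x. rewrite (claim2 x). rewrite key. rewrite rH. rewrite santiC. by rewrite eps_santi.
apply: (lin_ext linL linT).
by apply: antipode_unique => x; [exact: lL | exact: hT].
Qed.


End Main.

Theorem lemma5 (N : nat) (hN : (0 < N)%N) :
  (forall t : H2alg N,
      mult_op t = santi (mult (tmap (@santi N) (@santi N) t))) /\
  (forall x : Halg N,
      Delta x = tmap (@santi N) (@santi N) (Delta (santi x))) /\
  (forall SH SL : Halg N -> Halg N,
      is_antipode (@Delta N) SH ->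
      is_antipode (@Delta_cop N) SL ->
      forall x : Halg N, SL x = santi (SH (santi x))).
Proof.
split; first exact: claim1.
split; first exact: (claim2 hN).
exact: (lemma5_part3 hN).
Qed.
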